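(* Every spline $s\in\mathcal Z_{kl}^{\Delta\lambda,\Delta\mu}(\Omega)$ has a unique representation $$s(x,y)=\sum_{i=-k}^{g-1}\sum_{j=-l}^{h-1}z_{ij}\,Z_{ij}^{k+1,l+1}(x,y)+\sum_{i=-k}^{g-1}v_i\,Z_i^{k+1}(x,y)+\sum_{j=-l}^{h-1}u_j\,Z_j^{l+1}(x,y)$$ with real coefficients $z_{ij},v_i,u_j$.
   Context: Let $\Omega=[a,b]\times[c,d]\subset\mathbb R^2$ with $a<b$, $c<d$. Fix integers $g,h\ge 0$ and degrees $k,l\in\mathbb N_0$. Take knots $a=\lambda_0<\lambda_1<\dots<\lambda_g<\lambda_{g+1}=b$ and $c=\mu_0<\mu_1<\dots<\mu_h<\mu_{h+1}=d$, extended by coincident boundary knots $\lambda_{-k}=\dots=\lambda_0=a$, $\lambda_{g+1}=\dots=\lambda_{g+k+1}=b$, and $\mu_{-l}=\dots=\mu_0=c$, $\mu_{h+1}=\dots=\mu_{h+l+1}=d$. For $i=-k,\dots,g$ let $B_i^{k+1}(x)$ denote the (normalized) B-spline of degree $k$ with knots $\lambda_i,\dots,\lambda_{i+k+1}$, so that $\sum_{i=-k}^g B_i^{k+1}(x)=1$ on $[a,b]$; similarly $B_j^{l+1}(y)$, $j=-l,\dots,h$, is the B-spline of degree $l$ with knots $\mu_j,\dots,\mu_{j+l+1}$. Let $\mathcal S_{kl}^{\Delta\lambda,\Delta\mu}(\Omega)$ be the span of the functions $B_i^{k+1}(x)B_j^{l+1}(y)$, and $\mathcal Z_{kl}^{\Delta\lambda,\Delta\mu}(\Omega)=\{s\in\mathcal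 S_{kl}^{\Delta\lambda,\Delta\mu}(\Omega):\iint_\Omega s\,dx\,dy=0\}$. The univariate ZB-splines are, for $i=-k,\dots,g-1$, $$Z_i^{k+1}(x)=(k+1)\Big(\frac{B_i^{k+1}(x)}{\lambda_{i+k+1}-\lambda_i}-\frac{B_{i+1}^{k+1}(x)}{\lambda_{i+k+2}-\lambda_{i+1}}\Big),$$ and analogously $Z_j^{l+1}(y)=(l+1)\big(\frac{B_j^{l+1}(y)}{\mu_{j+l+1}-\mu_j}-\frac{B_{j+1}^{l+1}(y)}{\mu_{j+l+2}-\mu_{j+1}}\big)$ for $j=-l,\dots,h-1$. The bivariate ZB-splines are $Z_{ij}^{k+1,l+1}(x,y)=Z_i^{k+1}(x)Z_j^{l+1}(y)$, $Z_i^{k+1}(x,y)=Z_i^{k+1}(x)$ and $Z_j^{l+1}(x,y)=Z_j^{l+1}(y)$. *)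

(* Defs.v *)
From Stdlib Require Import Reals ZArith List.
From Coquelicot Require Import Coquelicot.
Open Scope R_scope.

(* guarded division: 0 when the denominator vanishes (the usual 0/0 := 0
   convention of the Cox--de Boor recursion) *)
Definition gdiv (num den : R) : R :=
  if Req_EM_T den 0 then 0 else num / den.

(* Normalized B-splines via Cox--de Boor on the knot sequence t : Z -> R.
   bspline t e p i x = B_i^{p+1}(x), degree p, knots t_i,...,t_{i+p+1}.
   Degree 0: indicator of [t_i, t_{i+1}), except that the (nondegenerate)
   interval ending at the right endpoint e is closed, so that the
   B-splines sum to 1 on the whole closed interval [a, e]. *)
Fixpoint bspline (t : Z -> R) (e : R) (p : nat) (i : Z) (x : R) : R :=
  match p with
  | O =>
      if Rle_dec (t i) x then
        if Rlt_dec x (t (i + 1)%Z) then 1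
        else if Req_EM_T x e then
               (if Rlt_dec (t i) (t (i + 1)%Z) then
                  (if Req_EM_T (t (i + 1)%Z) e then 1 else 0)
                else 0)
             else 0
      else 0
  | S q =>
      gdiv (x - t i) (t (i + Z.of_nat p)%Z - t i) * bspline t e q i x
      + gdiv (t (i + Z.of_nat p + 1)%Z - x) (t (i + Z.of_nat p + 1)%Z - t (i + 1)%Z)
          * bspline t e q (i + 1)%Z x
  end.

Definition zrange (m n : Z) : list Z :=
  map (fun k => (m + Z.of_nat k)%Z) (seq 0 (Z.to_nat (n - m + 1))).
Definition zsum (m n : Z) (f : Z -> R) : R :=
  fold_right Rplus 0 (map f (zrange m n)).

Definition knot_seq (lam : Z -> R) (a b : R) (g k : nat) : Prop :=
  (forall i : Z, (- Z.of_nat k <= i <= 0)%Z -> lam i = a) /\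
  (forall i : Z, (Z.of_nat g + 1 <= i <= Z.of_nat g + Z.of_nat k + 1)%Z -> lam i = b) /\
  (forall i : Z, (0 <= i <= Z.of_nat g)%Z -> lam i < lam (i + 1)%Z).

Definition zbspline (t : Z -> R) (e : R) (k : nat) (i : Z) (x : R) : R :=
  INR (k + 1) *
  ( bspline t e k i x / (t (i + Z.of_nat k + 1)%Z - t i)
  - bspline t e k (i + 1)%Z x / (t (i + Z.of_nat k + 2)%Z - t (i + 1)%Z)).

Definition in_spline_space (lam mu : Z -> R) (a b c d : R) (g h k l : nat)
    (s : R -> R -> R) : Prop :=
  exists coef : Z -> Z -> R,
    forall x y, a <= x <= b -> c <= y <= d ->
      s x y = zsum (- Z.of_nat k) (Z.of_nat g) (fun i =>
                zsum (- Z.of_nat l) (Z.of_nat h) (fun j =>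
                  coef i j * bspline lam b k i x * bspline mu d l j y)).

Definition dint (a b c d : R) (s : R -> R -> R) : R :=
  RInt (fun x => RInt (fun y => s x y) c d) a b.

Definition in_zero_spline_space (lam mu : Z -> R) (a b c d : R) (g h k l : nat)
    (s : R -> R -> R) : Prop :=
  in_spline_space lam mu a b c d g h k l s /\ dint a b c d s = 0.

Definition zb_expansion (lam mu : Z -> R) (b d : R) (g h k l : nat)
    (z : Z -> Z -> R) (v u : Z -> R) (x y : R) : R :=
  zsum (- Z.of_nat k) (Z.of_nat g - 1) (fun i =>
    zsum (- Z.of_nat l) (Z.of_nat h - 1) (fun j =>
      z i j * (zbspline lam b k i x * zbspline mu d l j y)))
  + zsum (- Z.of_nat k) (Z.of_nat g - 1) (fun i => v i * zbspline lam b k i x)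
  + zsum (- Z.of_nat l) (Z.of_nat h - 1) (fun j => u j * zbspline mu d l j y).

(* Main.v *)
Require Import Defs.
From Stdlib Require Import Reals ZArith List Lra Lia FunctionalExtensionality.
From Coquelicot Require Import Coquelicot.
Open Scope R_scope.

Lemma alg (u0 u1 u2 v w z x b0 b1 b2 n : R) :
 u0 <= u1 -> u1 <= v -> v <= w -> w <= z -> u1 <= u2 -> u2 <= w ->
 (v - u0 = 0 -> b0 = 0) -> (w - u1 = 0 -> b1 = 0) -> (z - u2 = 0 -> b2 = 0) ->
 gdiv 1 (w - u0) * (gdiv (x - u0) (v - u0) * b0 + gdiv (w - x) (w - u1) * b1)
 + gdiv (x - u0) (w - u0) * (n * (gdiv b0 (v - u0) - gdiv b1 (w - u1)))
 + (- gdiv 1 (z - u1) * (gdiv (x - u1) (w - u1) * b1 + gdiv (z - x) (z - u2) * b2)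
    + gdiv (z - x) (z - u1) * (n * (gdiv b1 (w - u1) - gdiv b2 (z - u2))))
 = (n + 1) * (gdiv (gdiv (x - u0) (v - u0) * b0 + gdiv (w - x) (w - u1) * b1) (w - u0)
              - gdiv (gdiv (x - u1) (w - u1) * b1 + gdiv (z - x) (z - u2) * b2) (z - u1)).
Proof.
  intros H1 H2 H3 H4 H5 H6 Z0 Z1 Z2.
  destruct (Req_EM_T (v - u0) 0) as [E0|E0]; [rewrite (Z0 E0)|].
  all: destruct (Req_EM_T (w - u1) 0) as [E1|E1]; [rewrite (Z1 E1)|].
  all: destruct (Req_EM_T (z - u2) 0) as [E2|E2]; [rewrite (Z2 E2)|].
  all: unfold gdiv.
  all: repeat match goal with |- context [Req_EM_T ?a 0] => destruct (Req_EM_T a 0) end.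
  all: try (exfalso; match goal with H : ?a <> 0 |- _ => apply H; lra end).
  all: try (field; repeat split; assumption).
Qed.

Definition nsum (N : nat) (h : nat -> R) : R := fold_right Rplus 0 (map h (seq 0 N)).

Lemma zsum_nsum m n f : zsum m n f = nsum (Z.to_nat (n - m + 1)) (fun j => f (m + Z.of_nat j)%Z).
Proof. unfold zsum, zrange, nsum. now rewrite map_map. Qed.

Lemma nsum_S_last N h : nsum (S N) h = nsum N h + h N.
Proof.
  unfold nsum. rewrite seq_S, map_app, fold_right_app. simpl.
  generalize (map h (seq 0 N)). intro l. induction l; simpl; lra.
Qed.

Lemma nsum_S_first N h : nsum (S N) h = h O + nsum N (fun j => h (S j)).
Proof.
  unfold nsum. simpl. f_equal. rewrite <- seq_shift, map_map. reflexivity.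
Qed.

Lemma zsum_empty m n f : (n < m)%Z -> zsum m n f = 0.
Proof. intro H. rewrite zsum_nsum. replace (Z.to_nat (n - m + 1)) with O by lia. reflexivity. Qed.

Lemma zsum_first m n f : (m <= n)%Z -> zsum m n f = f m + zsum (m+1) n f.
Proof.
  intro H. rewrite !zsum_nsum.
  replace (Z.to_nat (n - m + 1)) with (S (Z.to_nat (n - (m+1) + 1))) by lia.
  rewrite nsum_S_first. f_equal. f_equal. lia.
  unfold nsum. f_equal. apply map_ext. intro j. f_equal. lia.
Qed.

Lemma zsum_last m n f : (m <= n)%Z -> zsum m n f = zsum m (n-1) f + f n.
Proof.
  intro H. rewrite !zsum_nsum.
  replace (Z.to_nat (n - m + 1)) with (S (Z.to_nat (n - 1 - m + 1))) by lia.
  rewrite nsum_S_last. f_equal. f_equal. lia.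
Qed.

Lemma zsum_ext m n f g : (forall i, (m <= i <= n)%Z -> f i = g i) -> zsum m n f = zsum m n g.
Proof.
  intro H. rewrite !zsum_nsum. unfold nsum. f_equal. apply map_ext_in.
  intros j Hj. apply in_seq in Hj. apply H. lia.
Qed.

Lemma zsum_ind (m : Z) (P : Z -> Prop) :
  P (m - 1)%Z -> (forall n, (m <= n)%Z -> P (n - 1)%Z -> P n) -> forall n, (m - 1 <= n)%Z -> P n.
Proof.
  intros H0 HS n Hn.
  assert (forall N : nat, P (m - 1 + Z.of_nat N)%Z).
  { induction N. now replace (m - 1 + Z.of_nat 0)%Z with (m-1)%Z by lia.
    apply HS. lia. now replace (m - 1 + Z.of_nat (S N) - 1)%Z with (m - 1 + Z.of_nat N)%Z by lia. }
  replace n with (m - 1 + Z.of_nat (Z.to_nat (n - m + 1)))%Z by lia. apply H.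
Qed.

Lemma zsum_plus m n f g : zsum m n (fun i => f i + g i) = zsum m n f + zsum m n g.
Proof.
  destruct (Z_lt_le_dec n (m-1)) as [Hl|Hl].
  { rewrite !zsum_empty by lia. lra. }
  revert n Hl. apply zsum_ind.
  - rewrite !zsum_empty by lia. lra.
  - intros n Hn IH. rewrite !(zsum_last m n) by lia. rewrite IH. lra.
Qed.

Lemma zsum_scal m n c f : c * zsum m n f = zsum m n (fun i => c * f i).
Proof.
  destruct (Z_lt_le_dec n (m-1)) as [Hl|Hl].
  { rewrite !zsum_empty by lia. lra. }
  revert n Hl. apply zsum_ind.
  - rewrite !zsum_empty by lia. lra.
  - intros n Hn IH. rewrite !(zsum_last m n) by lia. rewrite <- IH. lra.
Qed.

Lemma zsum_0 m n : zsum m n (fun _ => 0) = 0.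
Proof.
  destruct (Z_lt_le_dec n (m-1)) as [Hl|Hl].
  { rewrite !zsum_empty by lia. lra. }
  revert n Hl. apply zsum_ind.
  - rewrite !zsum_empty by lia. lra.
  - intros n Hn IH. rewrite !(zsum_last m n) by lia. rewrite IH. lra.
Qed.

Lemma zsum_minus m n f g : zsum m n (fun i => f i - g i) = zsum m n f - zsum m n g.
Proof.
  replace (zsum m n f - zsum m n g) with (zsum m n f + (-1) * zsum m n g) by lra.
  rewrite zsum_scal, <- zsum_plus. apply zsum_ext. intros. lra.
Qed.

Lemma zsum_shift m n f : zsum (m+1) (n+1) f = zsum m n (fun i => f (i+1)%Z).
Proof.
  rewrite !zsum_nsum. replace (n + 1 - (m + 1) + 1)%Z with (n - m + 1)%Z by lia.
  unfold nsum. f_equal. apply map_ext. intro j. f_equal. lia.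
Qed.

Lemma zsum_delta m n (c : Z -> R) p : (m <= p <= n)%Z ->
  zsum m n (fun i => c i * (if Z.eq_dec i p then 1 else 0)) = c p.
Proof.
  intro Hp.
  assert (Hz : forall n', (n' < p)%Z -> zsum m n' (fun i => c i * (if Z.eq_dec i p then 1 else 0)) = 0).
  { intros n' Hn'. transitivity (zsum m n' (fun _ => 0)); [|apply zsum_0]. apply zsum_ext. intros i Hi.
    destruct (Z.eq_dec i p); [lia|ring]. }
  assert (forall n', (p <= n')%Z -> zsum m n' (fun i => c i * (if Z.eq_dec i p then 1 else 0)) = c p).
  { intros n' Hn'. assert (Hn2: (p + 1 - 1 <= n')%Z) by lia. revert n' Hn2 Hn'.
    apply (zsum_ind (p+1) (fun n' => (p <= n')%Z -> zsum m n' (fun i => c i * (if Z.eq_dec i p then 1 else 0)) = c p)).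
    - intros _. replace (p + 1 - 1)%Z with p by lia. rewrite zsum_last by lia. rewrite Hz by lia.
      destruct (Z.eq_dec p p); [ring|lia].
    - intros n' Hn' IH _. rewrite zsum_last by lia. rewrite IH by lia.
      destruct (Z.eq_dec n' p); [lia|ring]. }
  apply H. lia. 
Qed.

Lemma zsum_pos m n f : (m <= n)%Z -> (forall i, (m <= i <= n)%Z -> 0 < f i) -> 0 < zsum m n f.
Proof.
  intros H Hf. assert (H2 : (m + 1 - 1 <= n)%Z) by lia. clear H. revert n H2 Hf.
  apply (zsum_ind (m+1) (fun n => (forall i, (m <= i <= n)%Z -> 0 < f i) -> 0 < zsum m n f)).
  - intros Hf. replace (m+1-1)%Z with m by lia. rewrite zsum_first by lia.
    rewrite zsum_empty by lia. specialize (Hf m ltac:(lia)). lra.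
  - intros n Hn IH Hf. rewrite zsum_last by lia. specialize (IH (fun i Hi => Hf i ltac:(lia))).
    specialize (Hf n ltac:(lia)). lra.
Qed.

Lemma zsum_telescope m n f : (m - 1 <= n)%Z -> zsum m n (fun i => f i - f (i-1)%Z) = f n - f (m-1)%Z.
Proof.
  revert n. apply zsum_ind.
  - rewrite zsum_empty by lia. lra.
  - intros n Hn IH. rewrite zsum_last by lia. rewrite IH. lra.
Qed.

Lemma zsum_closed {A} (P : (A -> R) -> Prop) (F : Z -> A -> R) m n :
  P (fun _ => 0) ->
  (forall f g, P f -> P g -> P (fun x => f x + g x)) ->
  (forall i, (m <= i <= n)%Z -> P (F i)) ->
  P (fun x => zsum m n (fun i => F i x)).
Proof.
  intros H0 Hp HF.
  destruct (Z_lt_le_dec n (m-1)) as [Hl|Hl].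
  { replace (fun x => zsum m n (fun i => F i x)) with (fun _ : A => 0); auto.
    apply functional_extensionality. intro. rewrite zsum_empty by lia. reflexivity. }
  revert n Hl HF.
  apply (zsum_ind m (fun n => (forall i, (m <= i <= n)%Z -> P (F i)) -> P (fun x => zsum m n (fun i => F i x)))).
  - intros _. replace (fun x => zsum m (m-1) (fun i => F i x)) with (fun _ : A => 0); auto.
    apply functional_extensionality. intro. rewrite zsum_empty by lia. reflexivity.
  - intros n Hn IH HF.
    replace (fun x => zsum m n (fun i => F i x)) with (fun x => zsum m (n-1) (fun i => F i x) + F n x).
    + apply Hp. apply IH. intros. apply HF. lia. apply HF. lia.
    + apply functional_extensionality. intro. rewrite (zsum_last m n) by lia. reflexivity.
Qed.

Lemma is_derive_eq (f : R -> R) (x l1 l2 : R) : is_derive f x l1 -> l1 = l2 -> is_derive f x l2.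
Proof. intros H ->. exact H. Qed.

Lemma plusR (x y : R) : plus x y = x + y.
Proof. reflexivity. Qed.

Lemma gdiv0 D : gdiv 0 D = 0.
Proof. unfold gdiv. destruct (Req_EM_T D 0); [reflexivity|field; auto]. Qed.

Lemma der_const (c x : R) : is_derive (fun _ => c) x 0.
Proof. auto_derive; [exact I|reflexivity]. Qed.

Lemma gdiv_mul c D : gdiv c D = c * gdiv 1 D.
Proof. unfold gdiv. destruct (Req_EM_T D 0); field_simplify; auto; lra. Qed.

Lemma der_gl u D x : is_derive (fun y => gdiv (y - u) D) x (gdiv 1 D).
Proof.
  unfold gdiv. destruct (Req_EM_T D 0).
  - apply der_const.
  - auto_derive; [exact I|field; assumption].
Qed.

Lemma der_gr u D x : is_derive (fun y => gdiv (u - y) D) x (- gdiv 1 D).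
Proof.
  unfold gdiv. destruct (Req_EM_T D 0).
  - eapply is_derive_eq. apply der_const. lra.
  - auto_derive; [exact I|field; assumption].
Qed.

Lemma der_rec (f h : R -> R) x df dh u D U D' :
  is_derive f x df -> is_derive h x dh ->
  is_derive (fun y => gdiv (y - u) D * f y + gdiv (U - y) D' * h y) x
    (gdiv 1 D * f x + gdiv (x - u) D * df + (- gdiv 1 D' * h x + gdiv (U - x) D' * dh)).
Proof.
  intros Hf Hh.
  apply (is_derive_plus (fun y => gdiv (y - u) D * f y) (fun y => gdiv (U - y) D' * h y)).
  - apply (is_derive_mult (fun y => gdiv (y - u) D) f). apply der_gl. exact Hf.
    intros; apply Rmult_comm.
  - apply (is_derive_mult (fun y => gdiv (U - y) D') h). apply der_gr. exact Hh.
    intros; apply Rmult_comm.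
Qed.

Lemma is_RInt_eq (f : R -> R) (x y l1 l2 : R) : is_RInt f x y l1 -> l1 = l2 -> is_RInt f x y l2.
Proof. intros H ->. exact H. Qed.

Lemma der_loc0 (f : R -> R) (lo hi x0 l : R) : lo < x0 < hi ->
  (forall y, lo < y < hi -> f y = 0) -> is_derive f x0 l -> l = 0.
Proof.
  intros Hx Hf Hd.
  assert (Hl : locally x0 (fun y => f y = (fun _ : R => 0) y)).
  { assert (Hp : 0 < Rmin (x0 - lo) (hi - x0)) by (apply Rmin_pos; lra).
    exists (mkposreal _ Hp). intros y Hy. unfold ball in Hy; simpl in Hy.
    unfold AbsRing_ball, abs, minus, plus, opp in Hy; simpl in Hy.
    apply Hf. apply Rabs_def2 in Hy.
    pose proof (Rmin_l (x0 - lo) (hi - x0)). pose proof (Rmin_r (x0 - lo) (hi - x0)). lra. }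
  pose proof (is_derive_ext_loc f (fun _ => 0) x0 l Hl Hd) as H1.
  apply is_derive_unique in H1. pose proof (der_const 0 x0) as H2. apply is_derive_unique in H2.
  rewrite <- H1. exact H2.
Qed.

Lemma is_derive_zsum (F dF : Z -> R -> R) lo hi (x : R) :
  (forall i, (lo <= i <= hi)%Z -> is_derive (F i) x (dF i x)) ->
  is_derive (fun y => zsum lo hi (fun i => F i y)) x (zsum lo hi (fun i => dF i x)).
Proof.
  intros H.
  destruct (Z_lt_le_dec hi (lo-1)) as [Hl|Hl].
  { eapply is_derive_ext. intro y. symmetry. apply zsum_empty. lia.
    rewrite zsum_empty by lia. apply der_const. }
  revert hi Hl H.
  apply (zsum_ind lo (fun hi => (forall i, (lo <= i <= hi)%Z -> is_derive (F i) x (dF i x)) ->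
     is_derive (fun y => zsum lo hi (fun i => F i y)) x (zsum lo hi (fun i => dF i x)))).
  - intros _. eapply is_derive_ext. intro y. symmetry. apply zsum_empty. lia.
    rewrite zsum_empty by lia. apply der_const.
  - intros n Hn IH H.
    eapply is_derive_ext. intro y. symmetry. apply zsum_last. lia.
    rewrite (zsum_last lo n) by lia.
    exact (is_derive_plus (fun y => zsum lo (n-1) (fun i => F i y)) (F n) x _ _
             (IH (fun i Hi => H i ltac:(lia))) (H n ltac:(lia))).
Qed.

Lemma zsum_parts m n (c phi : Z -> R) : (m <= n)%Z ->
  zsum m n (fun i => c i * (phi i - phi (i+1)%Z)) =
  zsum (m+1) n (fun i => (c i - c (i-1)%Z) * phi i) + c m * phi m - c n * phi (n+1)%Z.
Proof.
  intro H. assert (H2 : (m + 1 - 1 <= n)%Z) by lia. clear H. revert n H2.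
  apply zsum_ind.
  - replace (m + 1 - 1)%Z with m by lia. rewrite zsum_first by lia. rewrite !zsum_empty by lia. ring.
  - intros n Hn IH. rewrite zsum_last by lia. rewrite IH. rewrite (zsum_last (m+1) n) by lia.
    replace (n - 1 + 1)%Z with n by lia. ring.
Qed.

Lemma cont_comb (f h : R -> R) (x c D D' : R) : continuous f x -> continuous h x ->
  continuous (fun y => c * (gdiv (f y) D - gdiv (h y) D')) x.
Proof.
  intros Hf Hh.
  apply (continuous_ext (fun y => c * (f y * gdiv 1 D - h y * gdiv 1 D'))).
  { intro y. rewrite (gdiv_mul (f y)), (gdiv_mul (h y)). reflexivity. }
  apply (continuous_mult (fun _ => c) (fun y => f y * gdiv 1 D - h y * gdiv 1 D')).
  apply continuous_const.
  apply (continuous_minus (fun y => f y * gdiv 1 D) (fun y => h y * gdiv 1 D')).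
  apply (continuous_mult f (fun _ => gdiv 1 D)). exact Hf. apply continuous_const.
  apply (continuous_mult h (fun _ => gdiv 1 D')). exact Hh. apply continuous_const.
Qed.

Section Spl.
Variables (t : Z -> R) (a e : R) (g : nat).
Notation G := (Z.of_nat g).
Hypothesis Hmono : forall i j, (i <= j)%Z -> t i <= t j.
Hypothesis Hlow : forall j, (j <= 0)%Z -> t j = a.
Hypothesis Hhigh : forall j, (G + 1 <= j)%Z -> t j = e.
Hypothesis Hstr : forall j, (0 <= j <= G)%Z -> t j < t (j+1)%Z.

Fixpoint pb (m : Z) (p : nat) (i : Z) (x : R) : R :=
  match p with
  | O => if Z.eq_dec i m then 1 else 0
  | S q => gdiv (x - t i) (t (i + Z.of_nat p)%Z - t i) * pb m q i x
      + gdiv (t (i + Z.of_nat p + 1)%Z - x) (t (i + Z.of_nat p + 1)%Z - t (i + 1)%Z) * pb m q (i + 1)%Z x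
  end.

Lemma pb_S m q i x : pb m (S q) i x =
  gdiv (x - t i) (t (i + Z.of_nat (S q))%Z - t i) * pb m q i x
      + gdiv (t (i + Z.of_nat (S q) + 1)%Z - x) (t (i + Z.of_nat (S q) + 1)%Z - t (i + 1)%Z) * pb m q (i + 1)%Z x.
Proof. reflexivity. Qed.

Lemma bspline_pb m x : (forall j, bspline t e 0 j x = if Z.eq_dec j m then 1 else 0) ->
  forall p j, bspline t e p j x = pb m p j x.
Proof.
  intros H0 p. induction p; intro j.
  - apply H0.
  - change (bspline t e (S p) j x) with
      (gdiv (x - t j) (t (j + Z.of_nat (S p))%Z - t j) * bspline t e p j x
      + gdiv (t (j + Z.of_nat (S p) + 1)%Z - x) (t (j + Z.of_nat (S p) + 1)%Z - t (j + 1)%Z) * bspline t e p (j + 1)%Z x).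
    rewrite pb_S, !IHp. reflexivity.
Qed.

Lemma te_ge m : (m <= G + 1)%Z -> t m <= e.
Proof. intro. rewrite <- (Hhigh (G+1)) by lia. apply Hmono. lia. Qed.

Lemma a_lt_e : a < e.
Proof. rewrite <- (Hlow 0) by lia. rewrite <- (Hhigh (G+1)) by lia.
  apply Rlt_le_trans with (t (0+1)%Z). apply Hstr. lia. apply Hmono. lia. Qed.

Ltac dif := repeat match goal with |- context [if ?c then _ else _] => destruct c end.

Lemma B0_int m x : (0 <= m <= G)%Z -> t m <= x < t (m+1)%Z ->
  forall j, bspline t e 0 j x = if Z.eq_dec j m then 1 else 0.
Proof.
  intros Hm Hx j. simpl. assert (t (m+1)%Z <= e) by (apply te_ge; lia).
  destruct (Z.eq_dec j m) as [->|Hjm].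
  - dif; lra.
  - destruct (Z_lt_le_dec j m).
    + assert (t (j+1)%Z <= t m) by (apply Hmono; lia). dif; lra.
    + assert (t (m+1)%Z <= t j) by (apply Hmono; lia). dif; lra.
Qed.

Lemma B0_end : forall j, bspline t e 0 j e = if Z.eq_dec j G then 1 else 0.
Proof.
  intro j. simpl. assert (HG : t G < t (G+1)%Z) by (apply Hstr; lia).
  assert (HG1 : t (G+1)%Z = e) by (apply Hhigh; lia).
  destruct (Z.eq_dec j G) as [->|Hjm].
  - dif; lra.
  - destruct (Z_lt_le_dec j G).
    + assert (t (j+1)%Z <= t G) by (apply Hmono; lia). dif; lra.
    + assert (t j = e) by (apply Hhigh; lia). assert (t (j+1)%Z = e) by (apply Hhigh; lia). dif; lra.
Qed.

Lemma pb_zero m p i x : (0 <= m <= G)%Z -> t i = t (i + Z.of_nat p + 1)%Z -> pb m p i x = 0.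
Proof.
  intro Hm. revert i. induction p; intros i Hi.
  - simpl. destruct (Z.eq_dec i m) as [->|]; auto.
    exfalso. specialize (Hstr m Hm). replace (m + Z.of_nat 0 + 1)%Z with (m+1)%Z in Hi by lia. lra.
  - rewrite pb_S.
    assert (A1 : t i <= t (i + Z.of_nat p + 1)%Z) by (apply Hmono; lia).
    assert (A2 : t (i + Z.of_nat p + 1)%Z <= t (i + Z.of_nat (S p) + 1)%Z) by (apply Hmono; lia).
    assert (A3 : t i <= t (i + 1)%Z) by (apply Hmono; lia).
    assert (A4 : t (i+1)%Z <= t (i + 1 + Z.of_nat p + 1)%Z) by (apply Hmono; lia).
    replace (i + 1 + Z.of_nat p + 1)%Z with (i + Z.of_nat (S p) + 1)%Z in A4 by lia.
    rewrite (IHp i) by lra. rewrite (IHp (i+1)%Z).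
    + ring.
    + replace (i + 1 + Z.of_nat p + 1)%Z with (i + Z.of_nat (S p) + 1)%Z by lia. lra.
Qed.

Lemma pb_derive m p i (x : R) : (0 <= m <= G)%Z ->
  is_derive (fun y => pb m (S p) i y) x
   (INR (S p) * (gdiv (pb m p i x) (t (i + Z.of_nat (S p))%Z - t i)
                 - gdiv (pb m p (i+1)%Z x) (t (i + Z.of_nat (S p) + 1)%Z - t (i+1)%Z))).
Proof.
  intro Hm. revert i x. induction p; intros i x.
  - eapply is_derive_eq.
    + eapply is_derive_ext. intro y. symmetry. apply pb_S.
      exact (der_rec (fun y => pb m 0 i y) (fun y => pb m 0 (i+1)%Z y) x 0 0 (t i) (t (i + Z.of_nat 1)%Z - t i) (t (i + Z.of_nat 1 + 1)%Z) (t (i + Z.of_nat 1 + 1)%Z - t (i + 1)%Z) (der_const _ _) (der_const _ _)).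
    + rewrite (gdiv_mul (pb m 0 i x)), (gdiv_mul (pb m 0 (i+1)%Z x)). change (INR 1) with 1. ring.
  - eapply is_derive_eq.
    + eapply is_derive_ext. intro y. symmetry. apply pb_S.
      exact (der_rec _ _ x _ _ (t i) (t (i + Z.of_nat (S (S p)))%Z - t i) (t (i + Z.of_nat (S (S p)) + 1)%Z) (t (i + Z.of_nat (S (S p)) + 1)%Z - t (i + 1)%Z) (IHp i x) (IHp (i+1)%Z x)).
    + rewrite !(pb_S m p).
      replace (i + 1 + Z.of_nat (S p))%Z with (i + Z.of_nat (S p) + 1)%Z by lia.
      replace (i + Z.of_nat (S (S p)))%Z with (i + Z.of_nat (S p) + 1)%Z by lia.
      replace (i + 1 + Z.of_nat (S p) + 1)%Z with (i + Z.of_nat (S (S p)) + 1)%Z by lia.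
      replace (INR (S (S p))) with (INR (S p) + 1) by (rewrite (S_INR (S p)); ring).
      apply alg.
      * apply Hmono; lia.
      * apply Hmono; lia.
      * apply Hmono; lia.
      * apply Hmono; lia.
      * apply Hmono; lia.
      * apply Hmono; lia.
      * intro E. apply pb_zero; auto. replace (i + Z.of_nat p + 1)%Z with (i + Z.of_nat (S p))%Z by lia. lra.
      * intro E. apply pb_zero; auto. replace (i + 1 + Z.of_nat p + 1)%Z with (i + Z.of_nat (S p) + 1)%Z by lia. lra.
      * intro E. apply pb_zero; auto. replace (i + 1 + 1 + Z.of_nat p + 1)%Z with (i + Z.of_nat (S p) + 1 + 1)%Z by lia. lra.
Qed.

Lemma pb_cont m p i (x : R) : (0 <= m <= G)%Z -> continuous (fun y => pb m p i y) x.
Proof.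
  intro Hm. destruct p.
  - apply continuous_const.
  - apply (ex_derive_continuous (K:=R_AbsRing) (V:=R_NormedModule)). eexists. apply pb_derive. exact Hm.
Qed.

Lemma t_lt i j : (i < j)%Z -> (1 <= j)%Z -> (i <= G)%Z -> t i < t j.
Proof.
  intros H1 H2 H3. set (i' := Z.max i 0).
  apply Rle_lt_trans with (t i'). apply Hmono. lia.
  apply Rlt_le_trans with (t (i'+1)%Z). apply Hstr. lia. apply Hmono. lia.
Qed.

Lemma pb_sum m p x : (0 <= m <= G)%Z -> zsum (- Z.of_nat p) G (fun i => pb m p i x) = 1.
Proof.
  intro Hm. induction p.
  - replace (- Z.of_nat 0)%Z with 0%Z by lia.
    rewrite <- (zsum_delta 0 G (fun _ => 1) m) by lia. apply zsum_ext. intros. simpl. ring.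
  - set (F := fun j => gdiv (t (j + Z.of_nat (S p))%Z - x) (t (j + Z.of_nat (S p))%Z - t j) * pb m p j x).
    set (W := fun j => gdiv (x - t j) (t (j + Z.of_nat (S p))%Z - t j) * pb m p j x).
    transitivity (zsum (- Z.of_nat (S p)) G W + zsum (- Z.of_nat (S p)) G (fun j => F (j+1)%Z)).
    { rewrite <- zsum_plus. apply zsum_ext. intros j Hj. rewrite pb_S. unfold W, F.
      replace (j + 1 + Z.of_nat (S p))%Z with (j + Z.of_nat (S p) + 1)%Z by lia. reflexivity. }
    rewrite <- zsum_shift. replace (- Z.of_nat (S p) + 1)%Z with (- Z.of_nat p)%Z by lia.
    rewrite zsum_first by lia. replace (- Z.of_nat (S p) + 1)%Z with (- Z.of_nat p)%Z by lia.
    rewrite (zsum_last _ (G+1)) by lia. replace (G + 1 - 1)%Z with G by lia.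
    assert (E1 : W (- Z.of_nat (S p))%Z = 0).
    { unfold W. rewrite pb_zero; auto. ring. rewrite !Hlow by lia. reflexivity. }
    assert (E2 : F (G + 1)%Z = 0).
    { unfold F. rewrite pb_zero; auto. ring. rewrite !Hhigh by lia. reflexivity. }
    rewrite E1, E2, <- IHp.
    transitivity (zsum (- Z.of_nat p) G (fun j => W j + F j)).
    { rewrite zsum_plus. ring. }
    apply zsum_ext. intros j Hj. unfold W, F. unfold gdiv.
    destruct (Req_EM_T (t (j + Z.of_nat (S p))%Z - t j) 0) as [E|E].
    + rewrite pb_zero; auto. ring. replace (j + Z.of_nat p + 1)%Z with (j + Z.of_nat (S p))%Z by lia. lra.
    + field. exact E.
Qed.

Lemma pb_match m q j : (0 <= m)%Z -> (m + 1 <= G)%Z ->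
  pb m (S q) j (t (m+1)%Z) = pb (m+1)%Z (S q) j (t (m+1)%Z).
Proof.
  intros H1 H2. induction q in j |- *.
  - rewrite !pb_S. simpl pb. change (Z.of_nat 1) with 1%Z.
    assert (A1 : t m < t (m+1)%Z) by (apply Hstr; lia).
    assert (A2 : t (m+1)%Z < t (m+1+1)%Z) by (apply Hstr; lia).
    destruct (Z.eq_dec j m) as [->|Hj1].
    + destruct (Z.eq_dec m (m+1)); [lia|]. destruct (Z.eq_dec (m+1) m); [lia|].
      destruct (Z.eq_dec (m+1) (m+1)); [|lia].
      unfold gdiv. repeat match goal with |- context [Req_EM_T ?a 0] => destruct (Req_EM_T a 0) end;
      try lra. field. lra.
    + destruct (Z.eq_dec j (m+1)) as [->|Hj2].
      * destruct (Z.eq_dec (m+1+1) m); [lia|]. destruct (Z.eq_dec (m+1+1) (m+1)); [lia|].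
        unfold gdiv. repeat match goal with |- context [Req_EM_T ?a 0] => destruct (Req_EM_T a 0) end;
        try lra.
      * destruct (Z.eq_dec (j+1) (m+1)); [lia|].
        destruct (Z.eq_dec (j+1) m) as [E|E].
        -- replace (j + 1 + 1)%Z with (m+1)%Z by lia.
           unfold gdiv. repeat match goal with |- context [Req_EM_T ?a 0] => destruct (Req_EM_T a 0) end;
           try lra.
        -- ring.
  - rewrite !(pb_S _ (S q)). rewrite !IHq. reflexivity.
Qed.

Lemma pb_a p i : (1 <= i + Z.of_nat p)%Z -> pb 0 p i a = 0.
Proof.
  induction p in i |- *; intro H.
  - simpl. destruct (Z.eq_dec i 0); [lia|reflexivity].
  - rewrite pb_S. rewrite (IHp (i+1)%Z) by lia.
    destruct (Z_le_gt_dec i 0).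
    + rewrite (Hlow i) by lia. replace (a - a) with 0 by ring. rewrite gdiv0. ring.
    + rewrite IHp by lia. ring.
Qed.

Lemma pb_e p i : (i <= G - 1)%Z -> pb G p i e = 0.
Proof.
  induction p in i |- *; intro H.
  - simpl. destruct (Z.eq_dec i G); [lia|reflexivity].
  - rewrite pb_S. rewrite (IHp i) by lia.
    destruct (Z_le_gt_dec (i+1) (G-1)).
    + rewrite IHp by lia. ring.
    + rewrite (Hhigh (i + Z.of_nat (S p) + 1)) by lia. replace (e - e) with 0 by ring. rewrite gdiv0. ring.
Qed.

Lemma locate x : a <= x < e -> exists m, (0 <= m <= G)%Z /\ t m <= x < t (m+1)%Z.
Proof.
  intro Hx.
  assert (forall n : nat, (n <= g)%nat -> x < t (Z.of_nat n + 1)%Z ->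
            exists m, (0 <= m <= G)%Z /\ t m <= x < t (m+1)%Z).
  { induction n; intros Hn H.
    - exists 0%Z. split. lia. rewrite Hlow by lia. split. lra. exact H.
    - destruct (Rlt_le_dec x (t (Z.of_nat n + 1)%Z)).
      + apply IHn. lia. exact r.
      + exists (Z.of_nat (S n)). split. lia. split. replace (Z.of_nat (S n)) with (Z.of_nat n + 1)%Z by lia. exact r.
        exact H. }
  apply (H g). lia. rewrite Hhigh by lia. lra.
Qed.

Lemma bsp_int m x : (0 <= m <= G)%Z -> t m <= x < t (m+1)%Z -> forall p j, bspline t e p j x = pb m p j x.
Proof. intros. apply bspline_pb. apply B0_int; auto. Qed.

Lemma bsp_closed x : a <= x <= e -> exists m, (0 <= m <= G)%Z /\ forall p j, bspline t e p j x = pb m p j x.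
Proof.
  intro Hx. destruct (Req_dec x e) as [->|Hne].
  - exists G. split. lia. apply bspline_pb. apply B0_end.
  - destruct (locate x) as [m [Hm Hxm]]. lra. exists m. split; auto. apply bsp_int; auto.
Qed.

Lemma bsp_sum p x : a <= x <= e -> zsum (- Z.of_nat p) G (fun i => bspline t e p i x) = 1.
Proof.
  intro Hx. destruct (bsp_closed x Hx) as [m [Hm H]].
  rewrite <- (pb_sum m p x Hm). apply zsum_ext. intros. apply H.
Qed.

Lemma Zpiece k i m : (- Z.of_nat k <= i <= G - 1)%Z -> (0 <= m <= G)%Z ->
  is_RInt (fun x => zbspline t e k i x) (t m) (t (m+1)%Z)
    (pb m (S k) i (t (m+1)%Z) - pb m (S k) i (t m)).
Proof.
  intros Hi Hm. assert (Hlt : t m < t (m+1)%Z) by (apply Hstr; lia).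
  assert (D1 : t i < t (i + Z.of_nat (S k))%Z) by (apply t_lt; lia).
  assert (D2 : t (i+1)%Z < t (i + Z.of_nat (S k) + 1)%Z) by (apply t_lt; lia).
  set (df := fun y => INR (S k) * (gdiv (pb m k i y) (t (i + Z.of_nat (S k))%Z - t i)
                 - gdiv (pb m k (i+1)%Z y) (t (i + Z.of_nat (S k) + 1)%Z - t (i+1)%Z))).
  apply (is_RInt_ext df).
  { intros x Hx. rewrite Rmin_left, Rmax_right in Hx by lra. unfold df, zbspline.
    rewrite !(bsp_int m x) by (auto; lra).
    replace (i + Z.of_nat k + 1)%Z with (i + Z.of_nat (S k))%Z by lia.
    replace (i + Z.of_nat k + 2)%Z with (i + Z.of_nat (S k) + 1)%Z by lia.
    replace (k + 1)%nat with (S k) by lia.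
    unfold gdiv. destruct (Req_EM_T _ 0); [lra|]. destruct (Req_EM_T _ 0); [lra|]. reflexivity. }
  eapply is_RInt_eq.
  - apply (is_RInt_derive (fun y => pb m (S k) i y) df).
    + intros x _. apply pb_derive. exact Hm.
    + intros x _. unfold df. apply cont_comb; apply pb_cont; exact Hm.
  - unfold minus, plus, opp; simpl. ring.
Qed.

Lemma Zint k i : (- Z.of_nat k <= i <= G - 1)%Z -> is_RInt (fun x => zbspline t e k i x) a e 0.
Proof.
  intro Hi.
  assert (forall n : nat, (n <= g)%nat ->
    is_RInt (fun x => zbspline t e k i x) (t 0%Z) (t (Z.of_nat n + 1)%Z)
      (pb (Z.of_nat n) (S k) i (t (Z.of_nat n + 1)%Z) - pb 0 (S k) i (t 0%Z))).
  { induction n; intro Hn.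
    - apply (Zpiece k i 0). exact Hi. lia.
    - eapply is_RInt_eq.
      + apply (is_RInt_Chasles _ _ (t (Z.of_nat n + 1)%Z)). apply IHn. lia.
        replace (Z.of_nat (S n) + 1)%Z with (Z.of_nat n + 1 + 1)%Z by lia.
        apply (Zpiece k i (Z.of_nat n + 1)). exact Hi. lia.
      + rewrite plusR. rewrite (pb_match (Z.of_nat n)) by lia.
        replace (Z.of_nat (S n)) with (Z.of_nat n + 1)%Z by lia. ring. }
  specialize (H g (le_n g)).
  rewrite (Hhigh (Z.of_nat g + 1)) in H by lia. rewrite (Hlow 0) in H by lia.
  rewrite pb_e in H by lia. rewrite pb_a in H by lia. eapply is_RInt_eq. exact H. ring.
Qed.

Lemma indep p : forall c : Z -> R,
  (forall m x, (0 <= m <= G)%Z -> t m < x < t (m+1)%Z ->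
     zsum (- Z.of_nat p) G (fun i => c i * pb m p i x) = 0) ->
  forall i, (- Z.of_nat p <= i <= G)%Z -> c i = 0.
Proof.
  induction p; intros c Hc i Hi.
  - assert (Hs := Hstr i ltac:(lia)).
    specialize (Hc i ((t i + t (i+1)%Z) / 2) ltac:(lia) ltac:(lra)).
    replace (- Z.of_nat 0)%Z with 0%Z in Hc by lia. rewrite <- Hc.
    symmetry. apply (zsum_delta 0 G c i). lia.
  - assert (Hd : forall i, (- Z.of_nat p <= i <= G)%Z -> c i = c (i-1)%Z).
    { assert (Hq : forall i, (- Z.of_nat p <= i <= G)%Z ->
         (c i - c (i-1)%Z) / (t (i + Z.of_nat (S p))%Z - t i) = 0).
      { apply IHp. intros m x0 Hm Hx0.
        set (phi := fun j => gdiv (pb m p j x0) (t (j + Z.of_nat (S p))%Z - t j)).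
        assert (Hder := is_derive_zsum (fun i y => c i * pb m (S p) i y)
          (fun i y => c i * (INR (S p) * (gdiv (pb m p i y) (t (i + Z.of_nat (S p))%Z - t i)
                 - gdiv (pb m p (i+1)%Z y) (t (i + Z.of_nat (S p) + 1)%Z - t (i+1)%Z))))
          (- Z.of_nat (S p)) G x0
          (fun i _ => is_derive_scal _ _ _ _ (pb_derive m p i x0 Hm))).
        apply (der_loc0 _ (t m) (t (m+1)%Z) x0 _ Hx0) in Hder.
        2:{ intros y Hy. apply Hc; auto. }
        assert (E : zsum (- Z.of_nat (S p)) G (fun i => c i * (INR (S p) * (gdiv (pb m p i x0) (t (i + Z.of_nat (S p))%Z - t i)
                 - gdiv (pb m p (i+1)%Z x0) (t (i + Z.of_nat (S p) + 1)%Z - t (i+1)%Z))))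
               = INR (S p) * zsum (- Z.of_nat (S p)) G (fun i => c i * (phi i - phi (i+1)%Z))).
        { rewrite zsum_scal. apply zsum_ext. intros j Hj. unfold phi.
          replace (j + 1 + Z.of_nat (S p))%Z with (j + Z.of_nat (S p) + 1)%Z by lia. ring. }
        cbv beta in Hder. rewrite E, zsum_parts in Hder by lia.
        assert (P1 : phi (- Z.of_nat (S p))%Z = 0).
        { unfold phi. rewrite pb_zero; auto. apply gdiv0. rewrite !Hlow by lia. reflexivity. }
        assert (P2 : phi (G + 1)%Z = 0).
        { unfold phi. rewrite pb_zero; auto. apply gdiv0. rewrite !Hhigh by lia. reflexivity. }
        rewrite P1, P2 in Hder. replace (- Z.of_nat (S p) + 1)%Z with (- Z.of_nat p)%Z in Hder by lia.
        assert (INR (S p) > 0) by (apply lt_0_INR; lia).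
        assert (Z0 : zsum (- Z.of_nat p) G (fun i => (c i - c (i-1)%Z) * phi i) = 0).
        { apply Rmult_eq_reg_l with (INR (S p)); [|lra]. lra. }
        rewrite <- Z0. apply zsum_ext. intros j Hj. unfold phi, gdiv.
        assert (t j < t (j + Z.of_nat (S p))%Z) by (apply t_lt; lia).
        destruct (Req_EM_T _ 0); [lra|]. field. lra. }
      intros j Hj. specialize (Hq j Hj).
      assert (t j < t (j + Z.of_nat (S p))%Z) by (apply t_lt; lia).
      apply Rminus_diag_uniq. unfold Rdiv in Hq. apply Rmult_integral in Hq. destruct Hq as [Hq|Hq]; auto.
      exfalso. apply Rinv_neq_0_compat in Hq; auto. lra. }
    assert (Hall : forall n : nat, (- Z.of_nat (S p) + Z.of_nat n <= G)%Z ->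
                   c (- Z.of_nat (S p) + Z.of_nat n)%Z = c (- Z.of_nat (S p))%Z).
    { induction n; intro Hn.
      - replace (- Z.of_nat (S p) + Z.of_nat 0)%Z with (- Z.of_nat (S p))%Z by lia. reflexivity.
      - rewrite Hd by lia. replace (- Z.of_nat (S p) + Z.of_nat (S n) - 1)%Z with (- Z.of_nat (S p) + Z.of_nat n)%Z by lia.
        apply IHn. lia. }
    assert (C0 : c (- Z.of_nat (S p))%Z = 0).
    { assert (Hs := Hstr 0 ltac:(lia)).
      specialize (Hc 0%Z ((t 0%Z + t (0+1)%Z) / 2) ltac:(lia) ltac:(lra)).
      rewrite <- (Rmult_1_r (c _)). rewrite <- (pb_sum 0 (S p) ((t 0%Z + t (0+1)%Z) / 2)) by lia.
      rewrite zsum_scal. rewrite <- Hc. apply zsum_ext. intros j Hj.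
      replace j with (- Z.of_nat (S p) + Z.of_nat (Z.to_nat (j + Z.of_nat (S p))))%Z at 2 by lia.
      rewrite Hall by lia. reflexivity. }
    replace i with (- Z.of_nat (S p) + Z.of_nat (Z.to_nat (i + Z.of_nat (S p))))%Z by lia.
    rewrite Hall by lia. exact C0.
Qed.

End Spl.

Lemma bspline_ext (t1 t2 : Z -> R) e p : forall i x,
  (forall j, (i <= j <= i + Z.of_nat p + 1)%Z -> t1 j = t2 j) ->
  bspline t1 e p i x = bspline t2 e p i x.
Proof.
  induction p; intros i x H.
  - simpl. rewrite !H by lia. reflexivity.
  - change (bspline t1 e (S p) i x) with
      (gdiv (x - t1 i) (t1 (i + Z.of_nat (S p))%Z - t1 i) * bspline t1 e p i x
      + gdiv (t1 (i + Z.of_nat (S p) + 1)%Z - x) (t1 (i + Z.of_nat (S p) + 1)%Z - t1 (i + 1)%Z) * bspline t1 e p (i + 1)%Z x).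
    change (bspline t2 e (S p) i x) with
      (gdiv (x - t2 i) (t2 (i + Z.of_nat (S p))%Z - t2 i) * bspline t2 e p i x
      + gdiv (t2 (i + Z.of_nat (S p) + 1)%Z - x) (t2 (i + Z.of_nat (S p) + 1)%Z - t2 (i + 1)%Z) * bspline t2 e p (i + 1)%Z x).
    rewrite !H by lia. rewrite (IHp i), (IHp (i+1)%Z). reflexivity.
    all: intros; apply H; lia.
Qed.

Section OneD.
Variables (lam : Z -> R) (a b : R) (g k : nat).
Hypothesis Hab : a < b.
Hypothesis Hks : knot_seq lam a b g k.
Notation G := (Z.of_nat g).
Notation K := (Z.of_nat k).

Definition clampT (j : Z) : R := lam (Z.max (- K) (Z.min j (G + K + 1))).

Lemma T_eq j : (- K <= j <= G + K + 1)%Z -> clampT j = lam j.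
Proof. intro. unfold clampT. f_equal. lia. Qed.

Lemma T_low j : (j <= 0)%Z -> clampT j = a.
Proof. intro. unfold clampT. destruct Hks as [H1 _]. apply H1. lia. Qed.

Lemma T_high j : (G + 1 <= j)%Z -> clampT j = b.
Proof. intro. unfold clampT. destruct Hks as [_ [H2 _]]. apply H2. lia. Qed.

Lemma T_str j : (0 <= j <= G)%Z -> clampT j < clampT (j+1)%Z.
Proof. intro. rewrite !T_eq by lia. destruct Hks as [_ [_ H3]]. apply H3. lia. Qed.

Lemma T_mono i j : (i <= j)%Z -> clampT i <= clampT j.
Proof.
  assert (Hs : forall j, clampT j <= clampT (j+1)%Z).
  { intro j0. destruct (Z_lt_le_dec j0 0).
    - rewrite !T_low by lia. lra.
    - destruct (Z_le_gt_dec j0 G).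
      + left. apply T_str. lia.
      + rewrite !T_high by lia. lra. }
  intro H. replace j with (i + Z.of_nat (Z.to_nat (j - i)))%Z by lia.
  induction (Z.to_nat (j - i)).
  - replace (i + Z.of_nat 0)%Z with i by lia. lra.
  - eapply Rle_trans. apply IHn. replace (i + Z.of_nat (S n))%Z with (i + Z.of_nat n + 1)%Z by lia. apply Hs.
Qed.

Ltac hyps := first [exact T_mono | exact T_low | exact T_high | exact T_str].

Lemma Bext p i x : (- K <= i)%Z -> (i + Z.of_nat p + 1 <= G + K + 1)%Z ->
  bspline lam b p i x = bspline clampT b p i x.
Proof. intros. apply bspline_ext. intros. symmetry. apply T_eq. lia. Qed.

Lemma Zext m x : (- K <= m <= G - 1)%Z -> zbspline lam b k m x = zbspline clampT b k m x.
Proof.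
  intro. unfold zbspline. rewrite !Bext by lia. rewrite !T_eq by lia. reflexivity.
Qed.

Lemma I1 m : (- K <= m <= G - 1)%Z -> is_RInt (fun x => zbspline lam b k m x) a b 0.
Proof.
  intro Hm. apply (is_RInt_ext (fun x => zbspline clampT b k m x)).
  { intros. symmetry. apply Zext. exact Hm. }
  eapply Zint; try hyps. exact Hm.
Qed.

Definition V1 (f : R -> R) := exists (kap : R) (w : Z -> R), forall x, a <= x <= b ->
  f x = kap + zsum (- K) (G - 1) (fun m => w m * zbspline lam b k m x).

Lemma V1_ext f f' : V1 f -> (forall x, a <= x <= b -> f x = f' x) -> V1 f'.
Proof. intros [kap [w H]] E. exists kap, w. intros. rewrite <- E by auto. auto. Qed.

Lemma V1_const c0 : V1 (fun _ => c0).
Proof. exists c0, (fun _ => 0). intros. transitivity (c0 + zsum (-K) (G-1) (fun _ => 0)).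
  rewrite zsum_0. ring. f_equal. apply zsum_ext. intros. ring. Qed.

Lemma V1_plus f f' : V1 f -> V1 f' -> V1 (fun x => f x + f' x).
Proof.
  intros [k1 [w1 H1]] [k2 [w2 H2]]. exists (k1 + k2), (fun m => w1 m + w2 m). intros x Hx.
  rewrite H1, H2 by auto. transitivity (k1 + k2 + zsum (- K) (G - 1) (fun m => w1 m * zbspline lam b k m x + w2 m * zbspline lam b k m x)).
  rewrite zsum_plus. ring. f_equal. apply zsum_ext. intros. ring.
Qed.

Lemma V1_scal c0 f : V1 f -> V1 (fun x => c0 * f x).
Proof.
  intros [k1 [w1 H1]]. exists (c0 * k1), (fun m => c0 * w1 m). intros x Hx.
  rewrite H1 by auto. rewrite Rmult_plus_distr_l, zsum_scal. f_equal. apply zsum_ext. intros. ring.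
Qed.

Lemma V1_Z m : (- K <= m <= G - 1)%Z -> V1 (fun x => zbspline lam b k m x).
Proof.
  intro Hm. exists 0, (fun j => if Z.eq_dec j m then 1 else 0). intros x Hx.
  rewrite Rplus_0_l. rewrite <- (zsum_delta (-K) (G-1) (fun j => zbspline lam b k j x) m Hm).
  apply zsum_ext. intros. ring.
Qed.

Definition Dl (i : Z) : R := clampT (i + K + 1)%Z - clampT i.
Definition phi (i : Z) (x : R) : R := INR (k+1) * (bspline clampT b k i x / Dl i).

Lemma Dl_pos i : (- K <= i <= G)%Z -> 0 < Dl i.
Proof. intro. unfold Dl. assert (clampT i < clampT (i + K + 1)%Z) by (eapply t_lt; try hyps; lia). lra. Qed.

Lemma Z_phi m x : (- K <= m <= G - 1)%Z -> zbspline lam b k m x = phi m x - phi (m+1)%Z x.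
Proof.
  intro Hm. rewrite Zext by auto. unfold zbspline, phi, Dl.
  replace (m + 1 + K + 1)%Z with (m + K + 2)%Z by lia. ring.
Qed.

Lemma kpos : 0 < INR (k+1).
Proof. apply lt_0_INR. lia. Qed.

Lemma B_phi i x : (- K <= i <= G)%Z -> bspline clampT b k i x = Dl i / INR (k+1) * phi i x.
Proof.
  intro. unfold phi. assert (0 < Dl i) by (apply Dl_pos; auto). pose proof kpos. field. lra.
Qed.

Lemma PU x : a <= x <= b -> zsum (- K) G (fun i => bspline clampT b k i x) = 1.
Proof. intro. eapply bsp_sum; try hyps. exact H. Qed.

Lemma E1spl i : (- K <= i <= G)%Z -> V1 (fun x => bspline lam b k i x).
Proof.
  intro Hi.
  assert (SA : forall n : nat, (Z.of_nat n <= G + K)%Z -> V1 (fun x => phi (G - Z.of_nat n)%Z x - phi G x)).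
  { induction n; intro Hn.
    - apply (V1_ext (fun _ => 0)). apply V1_const. intros. replace (G - Z.of_nat 0)%Z with G by lia. ring.
    - apply (V1_ext (fun x => zbspline lam b k (G - Z.of_nat (S n))%Z x + (phi (G - Z.of_nat n)%Z x - phi G x))).
      apply V1_plus. apply V1_Z. lia. apply IHn. lia.
      intros x Hx. rewrite Z_phi by lia. replace (G - Z.of_nat (S n) + 1)%Z with (G - Z.of_nat n)%Z by lia. ring. }
  assert (SA' : forall i, (- K <= i <= G)%Z -> V1 (fun x => phi i x - phi G x)).
  { intros j Hj. replace j with (G - Z.of_nat (Z.to_nat (G - j)))%Z by lia. apply SA. lia. }
  set (S := zsum (- K) G (fun i => Dl i / INR (k+1))).
  assert (HS : 0 < S).
  { apply zsum_pos. lia. intros. pose proof kpos. assert (0 < Dl i0) by (apply Dl_pos; auto).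
    apply Rdiv_lt_0_compat; lra. }
  assert (VG : V1 (fun x => phi G x)).
  { apply (V1_ext (fun x => / S * (1 + (-1) * zsum (- K) G (fun i => Dl i / INR (k+1) * (phi i x - phi G x))))).
    - apply V1_scal. apply V1_plus. apply V1_const. apply V1_scal.
      apply (zsum_closed V1 (fun i x => Dl i / INR (k+1) * (phi i x - phi G x))).
      apply V1_const. apply V1_plus. intros. apply V1_scal. apply SA'. auto.
    - intros x Hx. rewrite <- (PU x Hx).
      rewrite (zsum_ext _ _ _ (fun i => Dl i / INR (k+1) * phi i x)) by (intros; apply B_phi; auto).
      assert (E : zsum (- K) G (fun i => Dl i / INR (k+1) * phi i x) +
                 -1 * zsum (- K) G (fun i => Dl i / INR (k+1) * (phi i x - phi G x)) = phi G x * S).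
      { unfold S. rewrite zsum_scal, zsum_scal, <- zsum_plus. apply zsum_ext. intros. ring. }
      rewrite E. field. lra. }
  apply (V1_ext (fun x => Dl i / INR (k+1) * ((phi i x - phi G x) + phi G x))).
  - apply V1_scal. apply V1_plus. apply SA'. auto. exact VG.
  - intros x Hx. rewrite Bext by lia. rewrite B_phi by auto. ring.
Qed.

Lemma U1 (kap : R) (w : Z -> R) :
  (forall x, a <= x <= b -> kap + zsum (- K) (G - 1) (fun m => w m * zbspline lam b k m x) = 0) ->
  kap = 0 /\ forall m, (- K <= m <= G - 1)%Z -> w m = 0.
Proof.
  intro H.
  set (eh := fun m => if Z_le_dec (- K) m then if Z_le_dec m (G - 1) then w m else 0 else 0).
  assert (eh0 : eh (- K - 1)%Z = 0). { unfold eh. destruct (Z_le_dec (-K) (-K-1)); [lia|auto]. }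
  assert (ehG : eh G = 0). { unfold eh. destruct (Z_le_dec (-K) G); auto. destruct (Z_le_dec G (G-1)); [lia|auto]. }
  assert (ehw : forall m, (- K <= m <= G - 1)%Z -> eh m = w m).
  { intros m Hm. unfold eh. destruct (Z_le_dec (-K) m); [|lia]. destruct (Z_le_dec m (G-1)); [auto|lia]. }
  set (d := fun i => kap + (eh i - eh (i-1)%Z) * INR (k+1) / Dl i).
  assert (Hd : forall x, a <= x <= b -> zsum (- K) G (fun i => d i * bspline clampT b k i x) = 0).
  { intros x Hx. rewrite <- (H x Hx).
    assert (E1' : zsum (- K) (G - 1) (fun m => w m * zbspline lam b k m x)
                = zsum (- K) G (fun i => (eh i - eh (i-1)%Z) * phi i x)).
    { transitivity (zsum (- K) G (fun m => eh m * (phi m x - phi (m+1)%Z x))).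
      - rewrite (zsum_last (-K) G) by lia. rewrite ehG. rewrite Rmult_0_l, Rplus_0_r.
        apply zsum_ext. intros. rewrite ehw by lia. rewrite Z_phi by lia. reflexivity.
      - rewrite zsum_parts by lia. rewrite ehG. rewrite (zsum_first (-K) G) by lia.
        rewrite eh0. ring. }
    rewrite E1'.
    transitivity (kap * zsum (- K) G (fun i => bspline clampT b k i x)
                  + zsum (- K) G (fun i => (eh i - eh (i-1)%Z) * phi i x)).
    - rewrite zsum_scal, <- zsum_plus. apply zsum_ext. intros i Hi. unfold d, phi.
      assert (0 < Dl i) by (apply Dl_pos; auto). field. lra.
    - rewrite PU by auto. ring. }
  assert (Hd0 : forall i, (- K <= i <= G)%Z -> d i = 0).
  { apply (indep clampT a b g); try hyps. intros m x Hm Hx.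
    assert (a <= x <= b).
    { assert (a <= clampT m) by (rewrite <- (T_low 0) by lia; apply T_mono; lia).
      assert (clampT (m+1)%Z <= b) by (rewrite <- (T_high (G+1)) by lia; apply T_mono; lia). lra. }
    rewrite <- (Hd x H0). apply zsum_ext. intros. f_equal. symmetry.
    eapply bsp_int; try hyps. exact Hm. lra. }
  assert (Hdiff : forall i, (- K <= i <= G)%Z -> eh i - eh (i-1)%Z = - kap * (Dl i / INR (k+1))).
  { intros i Hi. specialize (Hd0 i Hi). unfold d in Hd0. assert (0 < Dl i) by (apply Dl_pos; auto).
    pose proof kpos. set (X := eh i - eh (i-1)%Z) in *.
    assert (E : X * INR (k+1) / Dl i = - kap) by lra.
    replace X with (X * INR (k+1) / Dl i * (Dl i / INR (k+1))) by (field; lra).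
    rewrite E. ring. }
  assert (Hk : kap = 0).
  { assert (T1 := zsum_telescope (- K) G eh ltac:(lia)).
    rewrite (zsum_ext _ _ _ (fun i => - kap * (Dl i / INR (k+1)))) in T1 by auto.
    rewrite <- zsum_scal, ehG in T1. replace (- K - 1)%Z with (- K - 1)%Z in T1 by lia. rewrite eh0 in T1.
    assert (0 < zsum (- K) G (fun i => Dl i / INR (k+1))).
    { apply zsum_pos. lia. intros. pose proof kpos. assert (0 < Dl i) by (apply Dl_pos; auto).
      apply Rdiv_lt_0_compat; lra. }
    nra. }
  split; auto.
  assert (Hz : forall n : nat, (- K - 1 + Z.of_nat n <= G)%Z -> eh (- K - 1 + Z.of_nat n)%Z = 0).
  { induction n; intro Hn.
    - replace (- K - 1 + Z.of_nat 0)%Z with (- K - 1)%Z by lia. exact eh0.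
    - assert (E := Hdiff (- K - 1 + Z.of_nat (S n))%Z ltac:(lia)).
      replace (- K - 1 + Z.of_nat (S n) - 1)%Z with (- K - 1 + Z.of_nat n)%Z in E by lia.
      rewrite IHn in E by lia. rewrite Hk in E. lra. }
  intros m Hm. rewrite <- ehw by auto.
  replace m with (- K - 1 + Z.of_nat (Z.to_nat (m + K + 1)))%Z by lia. apply Hz. lia.
Qed.

End OneD.

Lemma is_RInt_zsum (F : Z -> R -> R) (w : Z -> R) lo hi (al be : R) :
  (forall i, (lo <= i <= hi)%Z -> is_RInt (F i) al be (w i)) ->
  is_RInt (fun y => zsum lo hi (fun i => F i y)) al be (zsum lo hi w).
Proof.
  intros H.
  assert (B0 : forall n, (n < lo)%Z -> is_RInt (fun y => zsum lo n (fun i => F i y)) al be (zsum lo n w)).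
  { intros n Hn. apply (is_RInt_ext (fun _ => 0)). intros. rewrite zsum_empty by lia. reflexivity.
    eapply is_RInt_eq. apply is_RInt_const. rewrite zsum_empty by lia. unfold scal; simpl; unfold mult; simpl. ring. }
  destruct (Z_lt_le_dec hi (lo-1)) as [Hl|Hl]. { apply B0. lia. }
  revert hi Hl H.
  apply (zsum_ind lo (fun hi => (forall i, (lo <= i <= hi)%Z -> is_RInt (F i) al be (w i)) ->
     is_RInt (fun y => zsum lo hi (fun i => F i y)) al be (zsum lo hi w))).
  - intros _. apply B0. lia.
  - intros n Hn IH H.
    apply (is_RInt_ext (fun y => zsum lo (n-1) (fun i => F i y) + F n y)).
    { intros. rewrite (zsum_last lo n) by lia. reflexivity. }
    rewrite (zsum_last lo n) by lia.
    exact (is_RInt_plus (fun y => zsum lo (n-1) (fun i => F i y)) (F n) al be _ _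
             (IH (fun i Hi => H i ltac:(lia))) (H n ltac:(lia))).
Qed.

Lemma is_RInt_scalR (f : R -> R) (al be c0 l : R) : is_RInt f al be l ->
  is_RInt (fun y => c0 * f y) al be (c0 * l).
Proof. intro H. exact (is_RInt_scal f al be c0 l H). Qed.

Lemma is_RInt_constR (al be c0 : R) : is_RInt (fun _ => c0) al be ((be - al) * c0).
Proof. exact (is_RInt_const al be c0). Qed.

Lemma is_RInt_plusR (f h : R -> R) (al be l1 l2 : R) : is_RInt f al be l1 -> is_RInt h al be l2 ->
  is_RInt (fun y => f y + h y) al be (l1 + l2).
Proof. intros H1 H2. exact (is_RInt_plus f h al be l1 l2 H1 H2). Qed.

Lemma is_RInt_extR (f g : R -> R) (al be l : R) : (forall x, f x = g x) -> is_RInt f al be l -> is_RInt g al be l.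
Proof. intros E Hf. apply (is_RInt_ext f g). intros; apply E. exact Hf. Qed.

Section TwoD.
Variables (lam mu : Z -> R) (a b c d : R) (g h k l : nat).
Hypothesis Hab : a < b.
Hypothesis Hcd : c < d.
Hypothesis Hlam : knot_seq lam a b g k.
Hypothesis Hmu : knot_seq mu c d h l.
Notation G := (Z.of_nat g). Notation K := (Z.of_nat k).
Notation HH := (Z.of_nat h). Notation L := (Z.of_nat l).
Notation zb := (zb_expansion lam mu b d g h k l).
Notation Zx := (zbspline lam b k).
Notation Zy := (zbspline mu d l).

Definition V2 (f : R -> R -> R) := exists kap (z : Z -> Z -> R) (v u : Z -> R),
  forall x y, a <= x <= b -> c <= y <= d -> f x y = kap + zb z v u x y.

Lemma zb_lin (z z' : Z -> Z -> R) (v v' u u' : Z -> R) (al be x y : R) :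
  al * zb z v u x y + be * zb z' v' u' x y =
  zb (fun i j => al * z i j + be * z' i j) (fun i => al * v i + be * v' i) (fun j => al * u j + be * u' j) x y.
Proof.
  unfold zb_expansion.
  transitivity (zsum (- K) (G - 1) (fun i => al * zsum (- L) (HH - 1) (fun j => z i j * (Zx i x * Zy j y)) +
                    be * zsum (- L) (HH - 1) (fun j => z' i j * (Zx i x * Zy j y)))
     + zsum (- K) (G - 1) (fun i => al * (v i * Zx i x) + be * (v' i * Zx i x))
     + zsum (- L) (HH - 1) (fun j => al * (u j * Zy j y) + be * (u' j * Zy j y))).
  - rewrite !zsum_plus, <- !zsum_scal. ring.
  - f_equal; [f_equal|]; apply zsum_ext; intros.
    + rewrite !zsum_scal, <- zsum_plus. apply zsum_ext. intros. ring.
    + ring.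
    + ring.
Qed.

Lemma zb_zero x y : zb (fun _ _ => 0) (fun _ => 0) (fun _ => 0) x y = 0.
Proof.
  unfold zb_expansion.
  assert (E1 : zsum (- K) (G - 1) (fun i => zsum (- L) (HH - 1) (fun j => 0 * (Zx i x * Zy j y))) = 0).
  { transitivity (zsum (- K) (G - 1) (fun _ => 0)); [|apply zsum_0]. apply zsum_ext; intros.
    transitivity (zsum (- L) (HH - 1) (fun _ => 0)); [|apply zsum_0]. apply zsum_ext; intros. ring. }
  assert (E2 : zsum (- K) (G - 1) (fun i => 0 * Zx i x) = 0).
  { transitivity (zsum (- K) (G - 1) (fun _ => 0)); [|apply zsum_0]. apply zsum_ext; intros. ring. }
  assert (E3 : zsum (- L) (HH - 1) (fun j => 0 * Zy j y) = 0).
  { transitivity (zsum (- L) (HH - 1) (fun _ => 0)); [|apply zsum_0]. apply zsum_ext; intros. ring. }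
  rewrite E1, E2, E3. ring.
Qed.

Lemma V2_const c0 : V2 (fun _ _ => c0).
Proof. exists c0, (fun _ _ => 0), (fun _ => 0), (fun _ => 0). intros. rewrite zb_zero. ring. Qed.

Lemma V2_plus f f' : V2 f -> V2 f' -> V2 (fun x y => f x y + f' x y).
Proof.
  intros [k1 [z1 [v1 [u1 H1]]]] [k2 [z2 [v2 [u2 H2]]]].
  exists (k1 + k2), (fun i j => 1 * z1 i j + 1 * z2 i j), (fun i => 1 * v1 i + 1 * v2 i), (fun j => 1 * u1 j + 1 * u2 j).
  intros x y Hx Hy. rewrite H1, H2 by auto. rewrite <- zb_lin. ring.
Qed.

Lemma V2_ext f f' : V2 f -> (forall x y, a <= x <= b -> c <= y <= d -> f x y = f' x y) -> V2 f'.
Proof. intros [k1 [z1 [v1 [u1 H1]]]] E. exists k1, z1, v1, u1. intros. rewrite <- E by auto. auto. Qed.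

Lemma V2_prod (f1 f2 : R -> R) : V1 lam a b g k f1 -> V1 mu c d h l f2 -> V2 (fun x y => f1 x * f2 y).
Proof.
  intros [k1 [w1 H1]] [k2 [w2 H2]].
  exists (k1 * k2), (fun i j => w1 i * w2 j), (fun i => k2 * w1 i), (fun j => k1 * w2 j).
  intros x y Hx Hy. rewrite H1, H2 by auto. unfold zb_expansion.
  set (A := zsum (- K) (G - 1) (fun m => w1 m * Zx m x)).
  set (B := zsum (- L) (HH - 1) (fun m => w2 m * Zy m y)).
  assert (EAB : A * B = zsum (- K) (G - 1) (fun i => zsum (- L) (HH - 1) (fun j => w1 i * w2 j * (Zx i x * Zy j y)))).
  { unfold A. rewrite (Rmult_comm _ B), zsum_scal. apply zsum_ext. intros i Hi.
    unfold B. rewrite Rmult_comm, zsum_scal. apply zsum_ext. intros. ring. }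
  rewrite <- EAB.
  replace (zsum (- K) (G - 1) (fun i => k2 * w1 i * Zx i x)) with (k2 * A)
    by (unfold A; rewrite zsum_scal; apply zsum_ext; intros; ring).
  replace (zsum (- L) (HH - 1) (fun j => k1 * w2 j * Zy j y)) with (k1 * B)
    by (unfold B; rewrite zsum_scal; apply zsum_ext; intros; ring).
  ring.
Qed.

Lemma V2_spline s : in_spline_space lam mu a b c d g h k l s -> V2 s.
Proof.
  intros [coef Hc].
  apply (V2_ext (fun x y => zsum (- K) G (fun i => zsum (- L) HH (fun j =>
            coef i j * bspline lam b k i x * bspline mu d l j y)))).
  2:{ intros. symmetry. apply Hc; auto. }
  set (P := fun (F : R * R -> R) => V2 (fun x y => F (x, y))).
  assert (HP : P (fun p => zsum (- K) G (fun i => zsum (- L) HH (fun j =>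
            coef i j * bspline lam b k i (fst p) * bspline mu d l j (snd p))))).
  { apply (zsum_closed P (fun i p => zsum (- L) HH (fun j =>
            coef i j * bspline lam b k i (fst p) * bspline mu d l j (snd p)))).
    - exact (V2_const 0).
    - intros f1 f2 H1 H2. exact (V2_plus _ _ H1 H2).
    - intros i Hi. apply (zsum_closed P (fun j p => coef i j * bspline lam b k i (fst p) * bspline mu d l j (snd p))).
      + exact (V2_const 0).
      + intros f1 f2 H1 H2. exact (V2_plus _ _ H1 H2).
      + intros j Hj. unfold P; simpl.
        apply (V2_prod (fun x => coef i j * bspline lam b k i x) (fun y => bspline mu d l j y)).
        * apply (V1_scal lam a b g k). apply (E1spl lam a b g k Hlam). lia.
        * apply (E1spl mu c d h l Hmu). lia. }
  exact HP.
Qed.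

Lemma dint_val s kap z v u :
  (forall x y, a <= x <= b -> c <= y <= d -> s x y = kap + zb z v u x y) ->
  dint a b c d s = kap * (b - a) * (d - c).
Proof.
  intro Hrep. unfold dint.
  assert (Inner : forall x, a <= x <= b ->
     RInt (fun y => s x y) c d = (d - c) * kap + (d - c) * zsum (- K) (G - 1) (fun i => v i * Zx i x)).
  { intros x Hx. rewrite (RInt_ext _ (fun y => kap + zb z v u x y)).
    2:{ intros y Hy. rewrite Rmin_left, Rmax_right in Hy by lra. apply Hrep; auto. lra. }
    apply is_RInt_unique. unfold zb_expansion.
    eapply is_RInt_eq.
    - apply is_RInt_plusR. apply is_RInt_constR.
      apply is_RInt_plusR. apply is_RInt_plusR.
      + apply (is_RInt_zsum _ (fun _ => 0)). intros i Hi.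
        eapply is_RInt_eq. apply (is_RInt_zsum _ (fun _ => 0)). intros j Hj.
        apply (is_RInt_extR (fun y => (z i j * Zx i x) * Zy j y)). intros; ring.
        eapply is_RInt_eq. apply is_RInt_scalR. apply (I1 mu c d h l); auto. ring.
        apply zsum_0.
      + apply is_RInt_constR.
      + apply (is_RInt_zsum _ (fun _ => 0)). intros j Hj.
        eapply is_RInt_eq. apply is_RInt_scalR. apply (I1 mu c d h l); auto. ring.
    - rewrite !zsum_0. ring. }
  rewrite (RInt_ext _ (fun x => (d - c) * kap + (d - c) * zsum (- K) (G - 1) (fun i => v i * Zx i x))).
  2:{ intros x Hx. rewrite Rmin_left, Rmax_right in Hx by lra. apply Inner. lra. }
  apply is_RInt_unique. eapply is_RInt_eq.
  - apply is_RInt_plusR. apply is_RInt_constR. apply is_RInt_scalR.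
    apply (is_RInt_zsum _ (fun _ => 0)). intros i Hi.
    eapply is_RInt_eq. apply is_RInt_scalR. apply (I1 lam a b g k); auto. ring.
  - rewrite zsum_0. ring.
Qed.

Lemma zb_regroup z v u x y :
  zsum (- L) (HH - 1) (fun j => u j * Zy j y)
     + zsum (- K) (G - 1) (fun i => (zsum (- L) (HH - 1) (fun j => z i j * Zy j y) + v i) * Zx i x)
  = zb z v u x y.
Proof.
  assert (E : zsum (- K) (G - 1) (fun i => (zsum (- L) (HH - 1) (fun j => z i j * Zy j y) + v i) * Zx i x)
     = zsum (- K) (G - 1) (fun i => zsum (- L) (HH - 1) (fun j => z i j * (Zx i x * Zy j y)))
       + zsum (- K) (G - 1) (fun i => v i * Zx i x)).
  { rewrite <- zsum_plus. apply zsum_ext. intros. rewrite Rmult_plus_distr_r. f_equal.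
    rewrite Rmult_comm, zsum_scal. apply zsum_ext; intros; ring. }
  rewrite E. unfold zb_expansion. ring.
Qed.

Theorem main (s : R -> R -> R)
  (Hs : in_zero_spline_space lam mu a b c d g h k l s) :
  (exists (z : Z -> Z -> R) (v u : Z -> R),
     forall x y, a <= x <= b -> c <= y <= d ->
       s x y = zb_expansion lam mu b d g h k l z v u x y) /\
  (forall (z z' : Z -> Z -> R) (v v' u u' : Z -> R),
     (forall x y, a <= x <= b -> c <= y <= d ->
        s x y = zb_expansion lam mu b d g h k l z v u x y) ->
     (forall x y, a <= x <= b -> c <= y <= d ->
        s x y = zb_expansion lam mu b d g h k l z' v' u' x y) ->
     (forall i j, (- Z.of_nat k <= i <= Z.of_nat g - 1)%Z ->
                  (- Z.of_nat l <= j <= Z.of_nat h - 1)%Z -> z i j = z' i j) /\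
     (forall i, (- Z.of_nat k <= i <= Z.of_nat g - 1)%Z -> v i = v' i) /\
     (forall j, (- Z.of_nat l <= j <= Z.of_nat h - 1)%Z -> u j = u' j)).
Proof.
  destruct Hs as [Hsp Hint].
  destruct (V2_spline s Hsp) as [kap [z [v [u Hrep]]]].
  assert (Hk : kap = 0).
  { rewrite (dint_val s kap z v u Hrep) in Hint.
    assert (0 < (b - a) * (d - c)) by (apply Rmult_lt_0_compat; lra).
    assert (kap * ((b - a) * (d - c)) = 0) by (rewrite <- Hint; ring).
    apply Rmult_integral in H0. destruct H0; auto. lra. }
  split.
  - exists z, v, u. intros. rewrite Hrep by auto. rewrite Hk. ring.
  - intros z1 z2 v1 v2 u1 u2 H1 H2.
    set (dz := fun i j => 1 * z1 i j + (-1) * z2 i j).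
    set (dv := fun i => 1 * v1 i + (-1) * v2 i).
    set (du := fun j => 1 * u1 j + (-1) * u2 j).
    assert (D0 : forall x y, a <= x <= b -> c <= y <= d -> zb dz dv du x y = 0).
    { intros x y Hx Hy. unfold dz, dv, du. rewrite <- zb_lin. rewrite <- H1, <- H2 by auto. ring. }
    assert (Hy : forall y, c <= y <= d ->
       zsum (- L) (HH - 1) (fun j => du j * Zy j y) = 0 /\
       forall i, (- K <= i <= G - 1)%Z -> zsum (- L) (HH - 1) (fun j => dz i j * Zy j y) + dv i = 0).
    { intros y Hy. apply (U1 lam a b g k Hlam). intros x Hx. rewrite zb_regroup. apply D0; auto. }
    assert (HU : forall j, (- L <= j <= HH - 1)%Z -> du j = 0).
    { apply (U1 mu c d h l Hmu 0 du). intros y Hy'. rewrite (proj1 (Hy y Hy')). ring. }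
    assert (HV : forall i, (- K <= i <= G - 1)%Z -> dv i = 0 /\ forall j, (- L <= j <= HH - 1)%Z -> dz i j = 0).
    { intros i Hi. apply (U1 mu c d h l Hmu (dv i) (fun j => dz i j)). intros y Hy'.
      rewrite <- (proj2 (Hy y Hy') i Hi). ring. }
    split; [|split].
    + intros i j Hi Hj. assert (E := proj2 (HV i Hi) j Hj). unfold dz in E. lra.
    + intros i Hi. assert (E := proj1 (HV i Hi)). unfold dv in E. lra.
    + intros j Hj. assert (E := HU j Hj). unfold du in E. lra.
Qed.

End TwoD.

Theorem corollary2 (a b c d : R) (g h k l : nat) (lam mu : Z -> R)
  (Hab : a < b) (Hcd : c < d)
  (Hlam : knot_seq lam a b g k) (Hmu : knot_seq mu c d h l)
  (s : R -> R -> R)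
  (Hs : in_zero_spline_space lam mu a b c d g h k l s) :
  (exists (z : Z -> Z -> R) (v u : Z -> R),
     forall x y, a <= x <= b -> c <= y <= d ->
       s x y = zb_expansion lam mu b d g h k l z v u x y) /\
  (forall (z z' : Z -> Z -> R) (v v' u u' : Z -> R),
     (forall x y, a <= x <= b -> c <= y <= d ->
        s x y = zb_expansion lam mu b d g h k l z v u x y) ->
     (forall x y, a <= x <= b -> c <= y <= d ->
        s x y = zb_expansion lam mu b d g h k l z' v' u' x y) ->
     (forall i j, (- Z.of_nat k <= i <= Z.of_nat g - 1)%Z ->
                  (- Z.of_nat l <= j <= Z.of_nat h - 1)%Z -> z i j = z' i j) /\
     (forall i, (- Z.of_nat k <= i <= Z.of_nat g - 1)%Z -> v i = v' i) /\
     (forall j, (- Z.of_nat l <= j <= Z.of_nat h - 1)%Z -> u j = u' j)).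
Proof. eapply main; eauto. Qed.
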